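(* Let $k$ be a field and let $A$ be a $k$-algebra with filtration $A_0\subseteq A_1\subseteq\cdots$ (subspaces with $\bigcup_nA_n=A$ and $A_iA_j\subseteq A_{i+j}$). Let $R=\bigoplus_{n\ge0}x^nA_n\subseteq A[x]$ be the Rees algebra. Let $a(x)=a_1x+\cdots+a_mx^m\in R$ with $a_i\in A_i$, and suppose $a(x)$ is integral over $k[x]$. Then $a(x)^N\in xR$ for some $N\ge0$.
   Context: $A$ is associative with unit, $A[x]$ is the polynomial algebra over $A$ in a central indeterminate $x$, and $k[x]\subseteq A[x]$ via $k\subseteq A$. An element $a(x)\in A[x]$ is integral over $k[x]$ if $a(x)^n+p_{n-1}(x)a(x)^{n-1}+\cdots+p_0(x)=0$ for some $n\ge1$ and $p_i(x)\in k[x]$. Here $xR=\bigoplus_{n\ge1}x^nA_{n-1}$. *)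

(* Defs.v *)
From HB Require Import structures.
From mathcomp Require Import all_boot all_order all_algebra.
Set Implicit Arguments. Unset Strict Implicit. Unset Printing Implicit Defensive.
Import GRing.Theory.
Local Open Scope ring_scope.

Definition is_filtration (k : fieldType) (A : algType k) (F : nat -> {pred A}) : Prop :=
  [/\ (forall n, 0 \in F n /\
        forall (c : k) (u v : A), u \in F n -> v \in F n -> c *: u + v \in F n),
      (forall n, {subset F n <= F n.+1}),
      (forall a : A, exists n, a \in F n) &
      (forall i j (u v : A), u \in F i -> v \in F j -> u * v \in F (i + j)%N)].

Definition in_rees (k : fieldType) (A : algType k) (F : nat -> {pred A}) (p : {poly A}) : Prop :=
  forall n, p`_n \in F n.

(* xR = ⊕_{n>=1} x^n A_{n-1} *)
Definition in_xR (k : fieldType) (A : algType k) (F : nat -> {pred A}) (p : {poly A}) : Prop :=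
  p`_0 = 0 /\ forall n, p`_n.+1 \in F n.

Definition kx_in (k : fieldType) (A : algType k) (q : {poly k}) : {poly A} :=
  map_poly (fun c : k => c%:A) q.

Definition integral_over_kx (k : fieldType) (A : algType k) (a : {poly A}) : Prop :=
  exists (n : nat) (p : nat -> {poly k}),
    (0 < n)%N /\ a ^+ n + \sum_(i < n) kx_in A (p i) * a ^+ i = 0.

(* Main.v *)
Require Import Defs.
From mathcomp Require Import all_boot all_order all_algebra.
Local Open Scope ring_scope.
Import GRing.Theory.

Section Aux.
Variables (k : fieldType) (A : algType k) (F : nat -> {pred A}).
Hypothesis hF : is_filtration F.

Definition good (d : nat) (u : A) : Prop :=
  match d with 0 => u = 0 | d'.+1 => u \in F d' end.

Lemma F0 n : (0 : A) \in F n.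
Proof. by case: hF => h _ _ _; case: (h n). Qed.

Lemma FZD n c u v : u \in F n -> v \in F n -> c *: u + v \in F n.
Proof. by case: hF => h _ _ _; case: (h n) => _; apply. Qed.

Lemma FD n u v : u \in F n -> v \in F n -> u + v \in F n.
Proof. by move=> hu hv; rewrite -[u]scale1r; apply: FZD. Qed.

Lemma FZ n c u : u \in F n -> c *: u \in F n.
Proof. by move=> hu; rewrite -[_ *: _]addr0; apply: FZD => //; apply: F0. Qed.

Lemma Fmono m n u : (m <= n)%N -> u \in F m -> u \in F n.
Proof.
case: hF => _ hm _ _; elim: n => [|n IH]; first by rewrite leqn0 => /eqP ->.
rewrite leq_eqVlt => /orP [/eqP -> //| ] hlt hu; apply: hm; exact: IH.
Qed.

Lemma FM {i j u v} : u \in F i -> v \in F j -> u * v \in F (i + j).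
Proof. by case: hF => _ _ _; apply. Qed.

Lemma good0 d : good d 0.
Proof. by case: d => // d; apply: F0. Qed.

Lemma goodZ d c u : good d u -> good d (c *: u).
Proof. by case: d => [/= ->|d /=]; [rewrite scaler0 | apply: FZ]. Qed.

Lemma goodD d u v : good d u -> good d v -> good d (u + v).
Proof. by case: d => [/= -> ->|d /=]; [rewrite addr0 | apply: FD]. Qed.

Lemma goodN d u : good d u -> good d (- u).
Proof. by move=> h; rewrite -scaleN1r; apply: goodZ. Qed.

Lemma goodB d u v : good d u -> good d v -> good d (u - v).
Proof. by move=> hu hv; apply: goodD => //; apply: goodN. Qed.

Lemma good_sum d (I : Type) (r : seq I) (P : pred I) (f : I -> A) :
  (forall i, P i -> good d (f i)) -> good d (\sum_(i <- r | P i) f i).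
Proof. move=> h; apply: (big_ind (good d)) => //; [exact: good0 | exact: goodD]. Qed.

Lemma good_mono m d u : (m <= d)%N -> good m u -> good d u.
Proof.
case: m => [_ /= ->|m]; first exact: good0.
case: d => // d; rewrite ltnS => hmd /= hu; exact: Fmono hu.
Qed.

Lemma goodFM {i j u v} : u \in F i -> good j v -> good (i + j) (u * v).
Proof.
case: j => [hu /= ->|j hu hv]; first by rewrite mulr0 addn0; apply: good0.
by rewrite addnS /=; apply: FM.
Qed.

Definition inR (p : {poly A}) := forall n, p`_n \in F n.

Lemma inR_mul p q : inR p -> inR q -> inR (p * q).
Proof.
move=> hp hq n; rewrite coefM; apply: (big_ind (fun u => u \in F n)).
- exact: F0.
- exact: FD.
- move=> [m hm] _ /=; have := FM (hp m) (hq (n - m)%N).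
  by rewrite subnKC.
Qed.

Lemma powR (a : {poly A}) r : a`_0 = 0 -> inR a ->
  inR (a ^+ r.+1) /\ (a ^+ r.+1)`_0 = 0.
Proof.
move=> a0 ha; elim: r => [|r [IH1 IH2]]; first by rewrite expr1.
by rewrite exprSr; split; [apply: inR_mul | rewrite coef0M a0 mulr0].
Qed.

Lemma L1 (X w : {poly A}) d : inR X -> (forall m, (m < d)%N -> good m w`_m) ->
  good d ((X * w)`_d - X`_0 * w`_d).
Proof.
move=> hX IH; rewrite coefM big_ord_recl /= subn0 addrC addKr.
apply: good_sum => -[m hm] _ /=.
have hlt : (d - bump 0 m < d)%N by rewrite /bump /= add1n; rewrite ltn_subrL /=; case: (d) hm.
have := goodFM (hX (bump 0 m)) (IH _ hlt).
rewrite subnKC //; rewrite /bump /= add1n //.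
Qed.

Lemma L2 (P : {poly k}) (Y : {poly A}) d : (forall m, (m < d)%N -> good d Y`_m) ->
  good d ((kx_in A P * Y)`_d - P`_0 *: Y`_d).
Proof.
move=> IH; rewrite coefM big_ord_recl /= subn0 /kx_in.
rewrite !coef_map_id0 ?scale0r // mulr_algl addrC addKr.
apply: good_sum => -[m hm] _ /=; rewrite coef_map_id0 ?scale0r // mulr_algl.
apply: goodZ; apply: IH; rewrite /bump /= add1n ltn_subrL /=; by case: (d) hm.
Qed.

End Aux.
Arguments good {k A} F d u.
Arguments inR {k A} F p.
Arguments powR {k A F} hF a r.
Arguments L1 {k A F} hF X w d.
Arguments L2 {k A F} hF P Y d.
Arguments goodD {k A F} hF {d u v}.
Arguments goodZ {k A F} hF {d} c {u}.
Arguments goodN {k A F} hF {d u}.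
Arguments goodB {k A F} hF {d u v}.
Arguments good_sum {k A F} hF {d I r P f}.
Arguments good_mono {k A F} hF m d u.

Theorem lemma5p2 (k : fieldType) (A : algType k) (F : nat -> {pred A})
  (a : {poly A}) :
  is_filtration F ->
  a`_0 = 0 -> (forall i, a`_i \in F i) ->
  integral_over_kx a ->
  exists N : nat, in_xR F (a ^+ N).
Proof.
move=> hF a0 ha [n [p [n0 heq]]].
pose q i := if (i < n)%N then p i else 1.
have hS : \sum_(i < n.+1) kx_in A (q i) * a ^+ i.+1 = 0.
  rewrite big_ord_recr /= /q ltnn.
  have -> : kx_in A 1 = 1.
    apply/polyP => i; rewrite /kx_in coef_map_id0 ?scale0r // !coef1.
    by case: (i == 0%N); rewrite ?scale1r ?scale0r.
  rewrite mul1r.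
  transitivity ((a ^+ n + \sum_(i < n) kx_in A (p i) * a ^+ i) * a); last by rewrite heq mul0r.
  rewrite mulrDl mulr_suml -exprSr addrC; congr (_ + _).
  by apply: eq_bigr => i _; rewrite ltn_ord -mulrA -exprSr.
have exP : exists i, (i <= n)%N && ((q i)`_0 != 0).
  by exists n; rewrite leqnn /q ltnn coefC eqxx oner_neq0.
case: (ex_minnP exP) => j /andP [hjn hj0] hmin.
set c := (q j)`_0 in hj0.
set w := a ^+ j.+1.
suff hg : forall d, good F d w`_d.
  exists j.+1; split; [exact: (hg 0%N) | move=> d; exact: (hg d.+1)].
have hR : forall r, inR F (a ^+ r.+1) /\ (a ^+ r.+1)`_0 = 0 by move=> r; apply: powR.
apply: ltn_ind => d IH.
have hSd := congr1 (fun P : {poly A} => P`_d) hS.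
rewrite /= coef_sum coef0 in hSd.
have hj' : (j < n.+1)%N by [].
rewrite (bigD1 (Ordinal hj')) //= in hSd.
have hT : forall i : 'I_n.+1, i != Ordinal hj' ->
    good F d ((kx_in A (q i) * a ^+ i.+1)`_d).
  move=> i hij; case: (ltngtP i j) => hi.
  - have q0 : (q i)`_0 = 0.
      apply/eqP; apply: contraTT hi => h; have := hmin i.
      by rewrite -ltnS ltn_ord h -leqNgt => /(_ isT).
    have := L2 hF (q i) (a ^+ i.+1) d.
    rewrite q0 scale0r subr0; apply => m hm.
    exact: (good_mono hF m.+1 d _ hm (proj1 (hR i) m)).
  - have hij2 : (i - j = (i - j).-1.+1)%N by rewrite prednK // subn_gt0.
    have -> : a ^+ i.+1 = a ^+ (i - j).-1.+1 * w.
      by rewrite /w -exprD -hij2 addnS subnK // ltnW.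
    set X := a ^+ (i - j).-1.+1.
    have [XR X0] := hR (i - j).-1.
    have hw' : forall m, (m <= d)%N -> good F m (X * w)`_m.
      move=> m hm; have := L1 hF X w m XR.
      rewrite X0 mul0r subr0; apply => m' hm'; apply: IH.
      exact: leq_trans hm' hm.
    have := L2 hF (q i) (X * w) d.
    move=> /(_ (fun m hm => good_mono hF m d _ (ltnW hm) (hw' m (ltnW hm)))) h.
    rewrite -(subrK ((q i)`_0 *: (X * w)`_d) ((kx_in A (q i) * (X * w))`_d)).
    by apply: (goodD hF) => //; apply: (goodZ hF); apply: hw'.
  - by move: hij; rewrite -(inj_eq val_inj) /= hi eqxx.
have hTj : good F d ((kx_in A (q j) * w)`_d - c *: w`_d).
  apply: (L2 hF (q j) w d) => m hm.
  exact: (good_mono hF m d _ (ltnW hm) (IH m hm)).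
move/eqP: hSd; rewrite addr_eq0 -/w => /eqP hSd.
have hc : good F d (c *: w`_d).
  have -> : c *: w`_d = (kx_in A (q j) * w)`_d - ((kx_in A (q j) * w)`_d - c *: w`_d).
    by rewrite opprB addrCA subrr addr0.
  rewrite [X in X - _]hSd; apply: (goodB hF) => //; apply: (goodN hF).
  by apply: (good_sum hF) => i hi; apply: hT.
have -> : w`_d = c^-1 *: (c *: w`_d) by rewrite scalerA mulVf // scale1r.
exact: (goodZ hF).
Qed.
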